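(* Let $f\in\mathcal{C}$ be differentiable on $(0,\infty)$. Let $(P,Q)$ and $(P',Q')$ be two pairs of mutually absolutely continuous probability measures ($P\ll Q\ll P$, $P'\ll Q'\ll P'$). If $E_\gamma(P\|Q)=E_\gamma(P'\|Q')$ and $E_\gamma(Q\|P)=E_\gamma(Q'\|P')$ for all $\gamma\ge1$, then $D_f(P\|Q)=D_f(P'\|Q')$. Likewise, if $\mathcal{I}_\omega(P\|Q)=\mathcal{I}_\omega(P'\|Q')$ for all $\omega\in(0,1)$, then $D_f(P\|Q)=D_f(P'\|Q')$.
   Context: $\mathcal{C}$ is the set of convex $f\colon(0,\infty)\to\mathbb{R}$ with $f(1)=0$. For densities $p,q$ w.r.t. a dominating measure $\mu$, $D_f(P\|Q):=\int qf(p/q)\,\mathrm{d}\mu$ (standard conventions at $0$). $E_\gamma(P\|Q):=\sup_U(P(U)-\gamma Q(U))$ for $\gamma\ge1$; $\mathcal{I}_\omega(P\|Q):=D_{\phi_\omega}(P\|Q)$ with $\phi_\omega(t)=\min\{\omega,1-\omega\}-\min\{\omega t,1-\omega\}$. *)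

(* Defs.v *)
From HB Require Import structures.
From mathcomp Require Import all_boot all_order all_algebra.
From mathcomp Require Import all_classical all_reals all_analysis.
Set Implicit Arguments. Unset Strict Implicit. Unset Printing Implicit Defensive.
Import Order.TTheory GRing.Theory Num.Theory.
Import numFieldNormedType.Exports.
Local Open Scope classical_set_scope.
Local Open Scope ring_scope.

Definition convex_pos (R : realType) (f : R -> R) : Prop :=
  forall x y t : R, 0 < x -> 0 < y -> 0 <= t -> t <= 1 ->
    f (t * x + (1 - t) * y) <= t * f x + (1 - t) * f y.

Definition classC (R : realType) (f : R -> R) : Prop :=
  convex_pos f /\ f 1 = 0.

(* Conventions at 0: f(0) := lim_{t -> 0+} f(t),
   0 f(a/0) := a * lim_{t -> oo} f(t)/t, and 0 f(0/0) := 0. *)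
Definition f_at0 (R : realType) (f : R -> R) : \bar R :=
  lim ((fun t : R => (f t)%:E) @ 0^'+).
Definition f_slope_oo (R : realType) (f : R -> R) : \bar R :=
  lim ((fun t : R => (f t / t)%:E) @ +oo).

Definition fdiv_integrand (R : realType) (f : R -> R) (p q : R) : \bar R :=
  if 0 < q then
    (if 0 < p then (q * f (p / q))%:E else (q%:E * f_at0 f)%E)
  else
    (if 0 < p then (p%:E * f_slope_oo f)%E else 0%E).

Definition fdiv (d : measure_display) (T : measurableType d) (R : realType)
  (mu : {measure set T -> \bar R}) (f : R -> R) (p q : T -> R) : \bar R :=
  (\int[mu]_x fdiv_integrand f (p x) (q x))%E.

Definition is_density (d : measure_display) (T : measurableType d)
  (R : realType) (mu : {measure set T -> \bar R}) (P : set T -> \bar R)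
  (p : T -> R) : Prop :=
  measurable_fun setT p /\ (forall x, 0 <= p x) /\
  (forall A, measurable A -> P A = (\int[mu]_(x in A) (p x)%:E)%E).

Definition Egamma (d : measure_display) (T : measurableType d) (R : realType)
  (gamma : R) (P Q : set T -> \bar R) : \bar R :=
  ereal_sup [set (P U - gamma%:E * Q U)%E | U in measurable].

Definition phi (R : realType) (omega : R) (t : R) : R :=
  Num.min omega (1 - omega) - Num.min (omega * t) (1 - omega).

(* Main.v *)
Require Import Defs.
From HB Require Import structures.
From mathcomp Require Import all_boot all_order all_algebra.
From mathcomp Require Import all_classical all_reals all_analysis.
From mathcomp Require Import measurable_realfun.
From mathcomp Require Import ring lra.
Import Order.TTheory GRing.Theory Num.Theory.
Import numFieldNormedType.Exports.
Local Open Scope classical_set_scope.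
Local Open Scope ring_scope.
Set Implicit Arguments. Unset Strict Implicit.

Section density.
Local Open Scope ereal_scope.
Context d (T : measurableType d) (R : realType).
Variables (nu mu : {measure set T -> \bar R}) (q : T -> R).
Hypotheses (mq : measurable_fun setT q) (q0 : forall x, (0 <= q x)%R)
  (hq : forall A, measurable A -> nu A = \int[mu]_(x in A) (q x)%:E).

Import HBNNSimple.

Lemma density_change (f : T -> \bar R) (E : set T) : (forall x, 0 <= f x) ->
    measurable E -> measurable_fun E f ->
  \int[mu]_(x in E) (f x * (q x)%:E) = \int[nu]_(x in E) f x.
Proof.
move=> f0 mE mf; set g := fun x => (q x)%:E.
have mg : measurable_fun setT g by exact/measurable_EFinP.
have g0 x : 0 <= g x by rewrite lee_fin.
pose h := nnsfun_approx mE mf.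
have -> : \int[nu]_(x in E) f x =
    lim (\int[nu]_(x in E) (EFin \o h n) x @[n --> \oo]).
  have fE x : E x -> f x = lim ((EFin \o h n) x @[n --> \oo]).
    by move=> Ex; apply/esym/cvg_lim => //; exact: cvg_nnsfun_approx.
  under eq_integral => x /[!inE] /fE -> //.
  apply: monotone_convergence => //.
  - move=> n; apply/measurable_EFinP.
    by apply: (measurable_funS measurableT) => //; exact/measurable_funP.
  - by move=> n x Ex //=; rewrite lee_fin.
  - by move=> x Ex a b ab; rewrite lee_fin; exact/lefP/nd_nnsfun_approx.
have -> : \int[mu]_(x in E) (f \* g) x =
    lim (\int[mu]_(x in E) ((EFin \o h n) \* g) x @[n --> \oo]).
  have fg x : E x -> f x * g x = lim (((EFin \o h n) \* g) x @[n --> \oo]).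
    by move=> Ex; apply/esym/cvg_lim => //; apply: cvgeZr;
      [by []|exact: cvg_nnsfun_approx].
  under eq_integral => x /[!inE] /fg -> //.
  apply: monotone_convergence => [//| | |].
  - move=> n; apply/emeasurable_funM; apply/measurable_funTS.
      exact/measurable_EFinP.
    exact: mg.
  - by move=> n x Ex /=; rewrite mule_ge0 ?lee_fin.
  - by move=> x Ex a b ab/=; rewrite lee_wpmul2r ?lee_fin//; exact/lefP/nd_nnsfun_approx.
suff suf n : \int[mu]_(x in E) ((EFin \o h n) x * g x) =
    \int[nu]_(x in E) (EFin \o h n) x.
  by under eq_fun do rewrite suf.
transitivity (\int[nu]_(x in E)
   (\sum_(y \in range (h n)) (y * \1_(h n @^-1` [set y]) x)%:E)); last first.
  by apply: eq_integral => t tE; rewrite /= fimfunE -fsumEFin.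
have indich m r : measurable_fun E (fun x => (r * \1_(h m @^-1` [set r]) x)%:E).
  by apply: (measurable_comp measurableT) => //; exact: measurable_funM.
rewrite ge0_integral_fsum//; last by move=> m y Ey; exact: nnfun_muleindic_ge0.
transitivity (\int[mu]_(x in E) (\sum_(y \in range (h n))
    (y * \1_(h n @^-1` [set y]) x)%:E * g x)).
  under [RHS]eq_integral => x xE.
    rewrite -ge0_mule_fsuml => [|y]; last exact: nnfun_muleindic_ge0.
    rewrite fsumEFin // -(fimfunE _ x); over.
  by [].
rewrite ge0_integral_fsum//; last 2 first.
  - move=> y; apply: emeasurable_funM => //; apply: measurable_funTS.
    exact: mg.
  - by move=> m y Ey; rewrite mule_ge0 ?nnfun_muleindic_ge0.
apply: eq_fsbigr => r rhn.
under [RHS]eq_integral do rewrite EFinM.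
rewrite integralZl_indic_nnsfun => //.
under eq_integral do rewrite EFinM -muleA.
rewrite ge0_integralZl//.
- under eq_integral do rewrite muleC.
  rewrite (eq_integral (g \_ (h n @^-1` [set r]))); last first.
    by move=> x xE; rewrite epatch_indic.
  rewrite -integral_mkcondr -hq; last exact: measurableI.
  by rewrite integral_indic// setIC.
- apply: emeasurable_funM; first exact/measurable_EFinP.
  exact/measurable_funTS/mg.
- by move=> t Et; rewrite mule_ge0 ?lee_fin.
- by move: rhn; rewrite inE => -[t _ <-]; rewrite lee_fin.
Qed.

End density.

Lemma dom0 d (T : measurableType d) (R : realType)
  (m1 m2 : {measure set T -> \bar R}) (A : set T) :
  m1 `<< m2 -> measurable A -> m2 A = 0%E -> m1 A = 0%E.
Proof.
move=> h mA A0; apply: (h A) => //= B mB BA.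
apply/eqP; rewrite -measure_le0 -A0; apply: le_measure => //; rewrite inE.
all: by [].


Qed.

Lemma measurable_inv (R : realType) : measurable_fun [set: R] (@GRing.inv R).
Proof.
rewrite (_ : GRing.inv = fun x => if x == 0 then 0 else x^-1); last first.
  by apply/funext => x; case: eqP => // ->; rewrite invr0.
apply: measurable_fun_if => //.
- exact: measurable_fun_eqr.
- rewrite setTI (_ : _ @^-1` _ = [set x | x != 0]); last first.
    by apply/seteqP; split => x /=; case: eqP.
  apply: open_continuous_measurable_fun; first exact: open_neq.
  by move=> x; rewrite inE /= => x0; exact: inv_continuous.
Qed.

Lemma int0_null d (T : measurableType d) (R : realType)
  (mu : {measure set T -> \bar R}) (g : T -> R) (A : set T) :
  measurable A -> measurable_fun setT g -> (forall x, 0 <= g x) ->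
  (\int[mu]_(x in A) (g x)%:E = 0)%E -> mu (A `&` [set x | g x != 0]) = 0%E.
Proof.
move=> mA mg g0 i0.
have mgA : measurable_fun A (fun x => (g x)%:E).
  by apply/measurable_EFinP; exact: measurable_funS mg.
have : (\int[mu]_(x in A) `|(g x)%:E| = 0)%E.
  by rewrite -i0; apply: eq_integral => x _; rewrite gee0_abs // lee_fin.
move/(ae_eq_integral_abs mu mA mgA) => [N [mN N0 sN]].
apply: (subset_measure0 _ mN) => //.
- apply: measurableI => //; rewrite (_ : [set x | g x != 0] = g @^-1` (~` [set 0])).
    by rewrite -[X in measurable X]setTI; apply: mg => //; exact: measurableC.
  by apply/seteqP; split => x /=; move/eqP.
- move=> x [Ax gx]; apply: sN => /=; move=> /(_ Ax) /= [] /eqP.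
  by rewrite (negbTE gx).
Qed.

Lemma dens_integrable d (T : measurableType d) (R : realType)
  (mu : {measure set T -> \bar R}) (P : probability T R) (a : T -> R) :
  is_density mu P a -> mu.-integrable setT (fun x => (a x)%:E).
Proof.
move=> [ma [a0 Pa]]; apply/integrableP; split; first exact/measurable_EFinP.
rewrite (eq_integral (fun x => (a x)%:E)); last first.
  by move=> x _; rewrite gee0_abs // lee_fin.
by rewrite -Pa // probability_setT ltry.
Qed.

Lemma sup_lemma d (T : measurableType d) (R : realType)
  (mu : {measure set T -> \bar R}) (P Q : probability T R) (a b : T -> R) (c : R) :
  is_density mu P a -> is_density mu Q b ->
  ereal_sup [set (P U - c%:E * Q U)%E | U in measurable] =
  (\int[mu]_x (Num.max (a x - c * b x) 0)%:E)%E.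
Proof.
move=> hP hQ.
have iS U (f : T -> \bar R) : measurable U -> mu.-integrable setT f -> mu.-integrable U f.
  by move=> mU; apply: integrableS.
have ia := dens_integrable hP; have ib := dens_integrable hQ.
move: hP hQ => [ma [a0 Pa]] [mb [b0 Qb]].
set h := fun x => a x - c * b x.
have mh : measurable_fun setT h.
  by apply: measurable_funB => //; apply: measurable_funM.
have ih : mu.-integrable setT (fun x => (h x)%:E).
  rewrite /h; under eq_fun do rewrite EFinB EFinM.
  apply: integrableB => //; exact: integrableZl.
have ihp : mu.-integrable setT (fun x => (Num.max (h x) 0)%:E).
  apply: le_integrable ih => //.
    by apply/measurable_EFinP; apply: measurable_maxr.
  move=> x _; rewrite !abse_EFin lee_fin.
  rewrite ger0_norm ?le_max ?lexx ?orbT //.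
  by rewrite ge_max normr_ge0 ler_norm.
have PQU U : measurable U -> (P U - c%:E * Q U)%E = (\int[mu]_(x in U) (h x)%:E)%E.
  move=> mU; rewrite Pa // Qb // -integralZl //; last exact: iS _ _ mU ib.
  rewrite -integralB //; first exact: iS _ _ mU ia.
  by apply: integrableZl => //; exact: iS _ _ mU ib.
apply/eqP; rewrite eq_le; apply/andP; split.
  apply: ub_ereal_sup => _ [U mU <-]; rewrite PQU //.
  apply: (@le_trans _ _ (\int[mu]_(x in U) (Num.max (h x) 0)%:E)%E).
    apply: le_integral => //; [exact: iS _ _ mU ih|exact: iS _ _ mU ihp|].
    by move=> x _; rewrite lee_fin le_max lexx.
  apply: ge0_subset_integral => //.
    by apply/measurable_EFinP; apply: measurable_maxr.
  by move=> x _; rewrite lee_fin le_max lexx orbT.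
set U0 := h @^-1` `]0, +oo[.
have mU0 : measurable U0.
  by rewrite -[U0]setTI; apply: mh => //; exact: measurable_itv.
apply: ereal_sup_ubound; exists U0 => //; rewrite PQU // integral_mkcond.
apply: eq_integral => x _; rewrite patchE /U0.
case: ifPn => [|/negP]; rewrite inE /= in_itv /= andbT.
  by move=> h0; rewrite max_l // ltW.
by move=> /negP; rewrite -leNgt => h0; rewrite max_r.
Qed.

Lemma maxeE (R : realType) (r : R) : maxe (r%:E) 0%E = (Num.max r 0)%:E.
Proof. by rewrite EFin_max. Qed.

Section pair.
Context (R : realType) d (T : measurableType d) (P Q : probability T R)
  (mu : {measure set T -> \bar R}) (p q : T -> R).
Hypotheses (PQ : P `<< Q) (QP : Q `<< P)
  (hp : is_density mu P p) (hq : is_density mu Q q).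

Let mp := hp.1. Let p0 := hp.2.1. Let Pp := hp.2.2.
Let mq := hq.1. Let q0 := hq.2.1. Let Qq := hq.2.2.

Definition L x := p x / q x.

Lemma mL : measurable_fun setT L.
Proof. apply: measurable_funM => //; apply: measurableT_comp => //; exact: measurable_inv. Qed.

Lemma L0 x : 0 <= L x.
Proof. by rewrite /L divr_ge0. Qed.

Definition nu : {measure set R -> \bar R} :=
  measure_function_pushforward__canonical__measure_function_Measure Q mL.

Lemma nuE A : nu A = Q (L @^-1` A).
Proof. by []. Qed.

Let mN (g : T -> R) : measurable_fun setT g -> measurable [set x | g x = 0].
Proof.
move=> mg; rewrite (_ : [set x | g x = 0] = g @^-1` [set 0]) //.
by rewrite -[X in measurable X]setTI; apply: mg.
Qed.

Lemma Qp0 : Q [set x | p x = 0] = 0%E.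
Proof.
apply: dom0 QP (mN mp) _.
etransitivity; first exact: (Pp (mN mp)).
by rewrite (eq_integral (cst 0%E)) ?integral0 // => x; rewrite inE /= => ->.
Qed.

Lemma Pq0 : P [set x | q x = 0] = 0%E.
Proof.
apply: dom0 PQ (mN mq) _.
etransitivity; first exact: (Qq (mN mq)).
by rewrite (eq_integral (cst 0%E)) ?integral0 // => x; rewrite inE /= => ->.
Qed.

Lemma E_null : exists E : set T, [/\ measurable E, mu E = 0%E &
  forall x, ~ E x -> (0 < p x /\ 0 < q x) \/ (p x = 0 /\ q x = 0)].
Proof.
set E1 := [set x | p x = 0] `&` [set x | q x != 0].
set E2 := [set x | q x = 0] `&` [set x | p x != 0].
have mE1 : measurable E1.
  apply: measurableI; first exact: mN.
  rewrite (_ : [set x | q x != 0] = ~` [set x | q x = 0]); first exact/measurableC/mN.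
  by apply/seteqP; split => x /= /eqP.
have mE2 : measurable E2.
  apply: measurableI; first exact: mN.
  rewrite (_ : [set x | p x != 0] = ~` [set x | p x = 0]); first exact/measurableC/mN.
  by apply/seteqP; split => x /= /eqP.
have E10 : mu E1 = 0%E.
  by apply: int0_null => //; [exact: mN|rewrite -Qq ?Qp0 //; exact: mN].
have E20 : mu E2 = 0%E.
  by apply: int0_null => //; [exact: mN|rewrite -Pp ?Pq0 //; exact: mN].
exists (E1 `|` E2); split; first exact: measurableU.
  apply/eqP; rewrite -measure_le0; apply: le_trans (measureU2 _ mE1 mE2) _.
  by change (mu E1 + mu E2 <= 0)%E; rewrite E10 E20 adde0.
move=> x nE; have := p0 x; have := q0 x.
rewrite !le_eqVlt => /orP[/eqP qx|qx] /orP[/eqP px|px].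
- by right.
- by exfalso; apply: nE; right; split => /=; [rewrite -qx|rewrite gt_eqF].
- by exfalso; apply: nE; left; split => /=; [rewrite -px|rewrite gt_eqF].
- by left.
Qed.

Lemma transfer (G : R -> R) : measurable_fun setT G ->
  (\int[mu]_x (q x * G (L x))%:E = \int[nu]_y (G y)%:E)%E.
Proof.
move=> mG.
have mGL : measurable_fun setT (G \o L) by exact: measurableT_comp mG mL.
rewrite integralE [RHS]integralE; congr (_ - _)%E.
- rewrite (eq_integral (fun x => (Num.max (G (L x)) 0)%:E * (q x)%:E)%E); last first.
    move=> x _; rewrite funeposE maxeE -EFinM mulrC maxr_pMl ?mul0r //.
  rewrite (@density_change _ _ _ Q mu q mq q0 Qq) //; last 2 first.
  + by move=> x; rewrite lee_fin le_max lexx orbT.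
  + by apply/measurable_EFinP; apply: measurable_maxr.
  rewrite (eq_integral (fun y => (Num.max (G y) 0)%:E)); last first.
    by move=> y _; rewrite funeposE maxeE.
  rewrite (ge0_integral_pushforward mL) //.
  + by apply/measurable_EFinP; apply: measurable_maxr.
  + by move=> y _; rewrite lee_fin le_max lexx orbT.
- rewrite (eq_integral (fun x => (Num.max (- G (L x)) 0)%:E * (q x)%:E)%E); last first.
    move=> x _; rewrite funenegE -EFinN maxeE -EFinM mulrC maxr_pMl ?mul0r //.
    by rewrite mulNr.
  rewrite (@density_change _ _ _ Q mu q mq q0 Qq) //; last 2 first.
  + by move=> x; rewrite lee_fin le_max lexx orbT.
  + apply/measurable_EFinP; apply: measurable_maxr => //.
    exact: measurable_funN.
  rewrite (eq_integral (fun y => (Num.max (- G y) 0)%:E)); last first.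
    by move=> y _; rewrite funenegE -EFinN maxeE.
  rewrite (ge0_integral_pushforward mL) //.
  + apply/measurable_EFinP; apply: measurable_maxr => //.
    exact: measurable_funN.
  + by move=> y _; rewrite lee_fin le_max lexx orbT.
Qed.

Lemma fdiv_transfer (f F : R -> R) : measurable_fun setT F ->
  (forall y, 0 < y -> F y = f y) ->
  fdiv mu f p q = (\int[nu]_y (F y)%:E)%E.
Proof.
move=> mF hF.
pose I' x := if 0 < q x then (if 0 < p x then (q x * F (L x))%:E
    else ((q x)%:E * f_at0 f)%E)
  else (if 0 < p x then ((p x)%:E * f_slope_oo f)%E else 0%E).
have -> : fdiv mu f p q = (\int[mu]_x I' x)%E.
  rewrite /fdiv; apply: eq_integral => x _; rewrite /fdiv_integrand /I'.
  by case: ifP => qx; case: ifP => px //; rewrite hF // /L divr_gt0.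
have mFL : measurable_fun setT (fun x => (q x * F (L x))%:E).
  apply/measurable_EFinP; apply: measurable_funM => //.
  exact: measurableT_comp mF mL.
rewrite (ae_eq_integral (fun x => (q x * F (L x))%:E)) //; first exact: transfer.
- apply: measurable_fun_ifT.
  + exact: measurable_fun_ltr.
  + apply: measurable_fun_ifT => //; first exact: measurable_fun_ltr.
    by apply: emeasurable_funM => //; exact/measurable_EFinP.
  + apply: measurable_fun_ifT => //; first exact: measurable_fun_ltr.
    by apply: emeasurable_funM => //; exact/measurable_EFinP.
- have [E [mE E0 HE]] := E_null.
  exists E; split => // x /= H; apply: contrapT => nE; apply: H => _.
  rewrite /I'; case: (HE x nE) => [[px qx]|[px qx]].
    by rewrite px qx.
  by rewrite px qx ltxx mul0r.
Qed.

Lemma nu_setT : nu setT = 1%E.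
Proof. by rewrite nuE preimage_setT probability_setT. Qed.

Lemma Qq0 : Q [set x | q x = 0] = 0%E.
Proof.
etransitivity; first exact: (Qq (mN mq)).
by rewrite (eq_integral (cst 0%E)) ?integral0 // => x; rewrite inE /= => ->.
Qed.

Lemma nu_le0 : nu [set y | y <= 0] = 0%E.
Proof.
rewrite nuE.
have mA : measurable (L @^-1` [set y | y <= 0]).
  rewrite -[X in measurable X]setTI; apply: mL => //.
  rewrite (_ : [set y : R | y <= 0] = `]-oo, 0]%classic); first exact: measurable_itv.
  by apply/seteqP; split => y /=; rewrite in_itv.
apply: (subset_measure0 mA (measurableU _ _ (mN mp) (mN mq))).
  move=> x /= Lx; have : L x = (0:R) by apply/eqP; rewrite eq_le Lx L0.
  by rewrite /L => /eqP; rewrite mulf_eq0 invr_eq0 => /orP[/eqP|/eqP]; [left|right].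
apply/eqP; rewrite -measure_le0; apply: le_trans (measureU2 _ (mN mp) (mN mq)) _.
by change (Q [set x | p x = 0%R] + Q [set x | q x = 0%R] <= 0)%E; rewrite Qp0 Qq0 adde0.
Qed.

Lemma transfer_id (G : R -> R) : measurable_fun setT G ->
  (forall y, 0 <= y -> G y = y) -> (\int[nu]_y (G y)%:E)%E = 1%E.
Proof.
move=> mG hG; rewrite -transfer //.
rewrite (ae_eq_integral (fun x => (p x)%:E)) //.
- by rewrite -(probability_setT P); symmetry; exact: (Pp measurableT).
- apply/measurable_EFinP; apply: measurable_funM => //.
  exact: measurableT_comp mG mL.
- exact/measurable_EFinP.
- have [E [mE E0 HE]] := E_null.
  exists E; split => // x /= H; apply: contrapT => nE; apply: H => _.
  rewrite hG ?L0 //; case: (HE x nE) => [[px qx]|[px qx]].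
    by rewrite /L mulrC divfK // gt_eqF.
  by rewrite px qx mul0r.
Qed.

Lemma Egamma_PQ (g : R) : Egamma g P Q = (\int[nu]_y (Num.max (y - g) 0)%:E)%E.
Proof.
rewrite /Egamma (sup_lemma _ hp hq) -transfer; last first.
  by apply: measurable_maxr => //; apply: measurable_funB.
apply: ae_eq_integral => //.
- apply/measurable_EFinP; apply: measurable_maxr => //.
  apply: measurable_funB => //; exact: measurable_funM.
- apply/measurable_EFinP; apply: measurable_funM => //.
  have mg : measurable_fun setT (fun y : R => Num.max (y - g) 0).
    by apply: measurable_maxr => //; exact: measurable_funB.
  exact: measurableT_comp mg mL.
- have [E [mE E0 HE]] := E_null.
  exists E; split => // x /= H; apply: contrapT => nE; apply: H => _.
  case: (HE x nE) => [[px qx]|[px qx]].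
    rewrite maxr_pMr ?(ltW qx) // mulr0 mulrBr /L [q x * (p x / q x)]mulrC.
    by rewrite divfK ?gt_eqF // [q x * g]mulrC.
  by rewrite px qx mulr0 subr0 maxxx mul0r.
Qed.

Lemma Egamma_QP (g : R) : 0 <= g ->
  Egamma g Q P = (\int[nu]_y (Num.max (1 - g * y) 0)%:E)%E.
Proof.
move=> g0; rewrite /Egamma (sup_lemma _ hq hp) -transfer; last first.
  apply: measurable_maxr => //; apply: measurable_funB => //.
apply: eq_integral => x _; congr (_%:E).
have := q0 x; rewrite le_eqVlt => /orP[/eqP qx|qx].
  by rewrite -qx mul0r sub0r max_r // oppr_le0 mulr_ge0.
rewrite maxr_pMr ?(ltW qx) // mulr0 mulrBr mulr1 /L mulrCA.
by rewrite [q x * (p x / q x)]mulrC divfK ?gt_eqF.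
Qed.

End pair.

Section nu_facts.
Context (R : realType) (nu : {measure set R -> \bar R}).
Hypotheses (n1 : nu setT = 1%E) (nle0 : nu [set y | y <= 0] = 0%E)
  (nid : (\int[nu]_y y%:E)%E = 1%E) (nabs : (\int[nu]_y (`|y|)%:E)%E = 1%E).

Lemma iabs : nu.-integrable setT (fun y : R => (`|y|)%:E).
Proof.
apply/integrableP; split; first by apply/measurable_EFinP; exact: normr_measurable.
rewrite (eq_integral (fun y : R => (`|y|)%:E)); last by move=> y _; rewrite abse_EFin normr_id.
by rewrite nabs ltry.
Qed.

Lemma iid : nu.-integrable setT (fun y : R => y%:E).
Proof.
apply/integrableP; split; first exact/measurable_EFinP.
rewrite (eq_integral (fun y : R => (`|y|)%:E)); last by move=> y _; rewrite abse_EFin.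
by rewrite nabs ltry.
Qed.

Lemma icst (c : R) : nu.-integrable setT (fun y : R => c%:E).
Proof.
apply/integrableP; split; first exact: measurable_cst.
rewrite (eq_integral (cst ((`|c|)%:E : \bar R))) // integral_cst // n1 mule1 ltry //.
Qed.

Lemma iaff (a b : R) : nu.-integrable setT (fun y : R => (a + b * `|y|)%:E).
Proof.
under eq_fun do rewrite EFinD EFinM.
apply: integrableD => //; first exact: icst.
exact: integrableZl iabs.
Qed.

Lemma ibound (G : R -> R) (a b : R) : measurable_fun setT G ->
  (forall y, `|G y| <= a + b * `|y|) -> nu.-integrable setT (fun y : R => (G y)%:E).
Proof.
move=> mG hG; apply: le_integrable (iaff a b) => //; first exact/measurable_EFinP.
move=> y _; rewrite !abse_EFin lee_fin (le_trans (hG y)) // ler_norm //.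
Qed.

Definition C (t : R) := (\int[nu]_y (Num.max (y - t) 0)%:E)%E.

Lemma mC (t : R) : measurable_fun setT (fun y : R => Num.max (y - t) 0).
Proof. by apply: measurable_maxr => //; exact: measurable_funB. Qed.

Lemma iC (t : R) : nu.-integrable setT (fun y : R => (Num.max (y - t) 0)%:E).
Proof.
apply: (ibound (a := `|t|) (b := 1)) => //; first exact: mC.
move=> y; rewrite mul1r ger0_norm ?le_max ?lexx ?orbT //.
rewrite ge_max addr_ge0 ?andbT // (le_trans (ler_norm _)) //.
by rewrite (le_trans (ler_normB _ _)) // addrC.
Qed.

Lemma C_conv (t : R) : 0 < t ->
  C t = (t%:E * \int[nu]_y (Num.max (1 - t^-1 * y) 0)%:E + (1 - t)%:E)%E.
Proof.
move=> t0; rewrite /C.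
have mM : measurable_fun setT (fun y : R => Num.max (1 - t^-1 * y) 0).
  apply: measurable_maxr => //; apply: measurable_funB => //.
have iM : nu.-integrable setT (fun y : R => (Num.max (1 - t^-1 * y) 0)%:E).
  apply: (ibound (a := 1) (b := t^-1)) => // y.
  rewrite ger0_norm; last by rewrite le_max lexx orbT.
  rewrite ge_max; apply/andP; split; last first.
    by rewrite addr_ge0 // mulr_ge0 // invr_ge0 ltW.
  rewrite (le_trans (ler_norm _)) // (le_trans (ler_normB _ _)) // normr1 normrM.
  by rewrite [`|t^-1|]ger0_norm // invr_ge0 ltW.
rewrite (eq_integral (fun y : R => (t%:E * (Num.max (1 - t^-1 * y) 0)%:E + (y%:E + (- t)%:E)))%E); last first.
  move=> y _; rewrite -!EFinM -!EFinD; congr (_%:E).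
  rewrite maxr_pMr ?ltW // mulr0 mulrBr mulr1 mulrA mulfV ?gt_eqF // mul1r.
  have [yt|yt] := leP y t.
    rewrite max_r; last by rewrite subr_le0.
    rewrite max_l; last by rewrite subr_ge0.
    lra.
  rewrite max_l; last by rewrite subr_ge0 ltW.
  rewrite max_r; last by rewrite subr_le0 ltW.
  lra.
rewrite integralD //; last first.
  by apply: integrableD => //; [exact: iid|exact: icst].
  exact: integrableZl.
rewrite integralZl // integralD //; [|exact: iid|exact: icst].
rewrite nid integral_cst // n1 mule1.
by rewrite EFinB addeA.
Qed.

End nu_facts.

Lemma hinge_diff (R : realFieldType) (t s k : R) : 0 < k ->
  k * (Num.max (s - t) 0 - Num.max (s - (t + k^-1)) 0) =
  Num.min (k * Num.max (s - t) 0) 1.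
Proof.
move=> k0; set e := k^-1.
have e0 : 0 < e by rewrite invr_gt0.
have ke : k * e = 1 by rewrite mulfV ?gt_eqF.
have [st|st] := leP s t.
  rewrite max_r ?subr_le0 // max_r; last by rewrite subr_le0 ler_wpDr // ltW.
  by rewrite subrr mulr0 min_l.
have [se|se] := leP s (t + e).
  rewrite max_l ?subr_ge0 ?ltW // max_r ?subr_le0 // subr0 min_l //.
  have : k * (s - t) <= k * e by apply: ler_wpM2l; [exact: ltW|lra].
  by rewrite ke.
rewrite max_l ?subr_ge0 ?ltW // max_l ?subr_ge0 ?ltW //.
have -> : s - t - (s - (t + e)) = e by ring.
rewrite ke min_r //.
have : k * e <= k * (s - t).
  by apply: ler_wpM2l; [exact: ltW|lra].
by rewrite ke.
Qed.

Section uniq.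
Context (R : realType).

Definition good (nu : {measure set R -> \bar R}) :=
  [/\ nu setT = 1%E, nu [set y | y <= 0] = 0%E,
      (\int[nu]_y y%:E)%E = 1%E & (\int[nu]_y (`|y|)%:E)%E = 1%E].

Let g (t : R) (n : nat) (y : R) := (Num.min (n.+1%:R * Num.max (y - t) 0) 1)%:E.

Lemma g_int (nu : {measure set R -> \bar R}) t n : good nu ->
  (\int[nu]_y g t n y = n.+1%:R%:E * (C nu t - C nu (t + n.+1%:R^-1)))%E.
Proof.
move=> [n1 nle0 nid nabs].
have it := iC n1 nabs t; have it' := iC n1 nabs (t + n.+1%:R^-1).
rewrite /C -integralB // -integralZl //.
apply: eq_integral => y _; rewrite /g -hinge_diff ?ltr0Sn //.
exact: integrableB.
Qed.

Lemma g_lim t : forall y, limn (g t ^~ y) = (\1_(`]t, +oo[%classic) y)%:E.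
Proof.
move=> y; rewrite indicE; have [ty|ty] := ltP t y.
  rewrite mem_set /=; last by rewrite in_itv /= ty.
  apply/cvg_lim => //; apply: cvg_near_cst.
  have yt0 : 0 < y - t by rewrite subr_gt0.
  apply: filterS (near_infty_natSinv_lt (PosNum yt0)) => n /= hn.
  have hyt : 0 <= y - t by exact: ltW.
  rewrite /g (max_l hyt) min_r //.
  have n0 : (0 : R) < n.+1%:R by rewrite ltr0Sn.
  apply: (@le_trans _ _ (n.+1%:R * n.+1%:R^-1)); first by rewrite mulfV ?lt0r_neq0.
  by apply: ler_wpM2l; exact: ltW.
rewrite memNset /=; last by rewrite in_itv /= ltNge ty.
rewrite (_ : (g t)^~ y = cst 0%E); first by rewrite lim_cst.
by apply/funext => n; rewrite /g /= max_r ?subr_le0 // mulr0 min_l.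
Qed.

Lemma ray_lim (nu : {measure set R -> \bar R}) t :
  nu `]t, +oo[%classic = limn (fun n => \int[nu]_y g t n y)%E.
Proof.
rewrite -monotone_convergence //.
- rewrite (eq_integral (fun y => (\1_(`]t, +oo[%classic) y)%:E)); last first.
    by move=> y _; rewrite g_lim.
  by rewrite integral_indic // setIT.
- move=> n; apply/measurable_EFinP; apply: measurable_minr => //.
  apply: measurable_funM => //; exact: mC.
- move=> n y _; rewrite lee_fin le_min ler01 andbT; apply: mulr_ge0 => //.
  by rewrite le_max lexx orbT.
- move=> y _ m n mn; rewrite lee_fin /g.
  rewrite le_min !ge_min lexx orbT andbT; apply/orP; left.
  apply: ler_wpM2r; first by rewrite le_max lexx orbT.
  by rewrite ler_nat.
Qed.

Lemma nu_uniq (nu1 nu2 : {measure set R -> \bar R}) :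
  good nu1 -> good nu2 -> (forall t, 0 < t -> C nu1 t = C nu2 t) ->
  forall A, measurable A -> nu1 A = nu2 A.
Proof.
move=> h1 h2 hC.
have rayp t : 0 < t -> nu1 `]t, +oo[%classic = nu2 `]t, +oo[%classic.
  move=> t0; rewrite !ray_lim; apply/congr_lim/funext => n.
  rewrite !g_int // !hC // addr_gt0 // invr_gt0 ltr0Sn.
have rayn (nu : {measure set R -> \bar R}) t : good nu -> t <= 0 ->
    nu `]t, +oo[%classic = 1%E.
  move=> [n1 nle0 _ _] t0.
  have -> : nu `]t, +oo[%classic = (nu `]-oo, t]%classic + nu `]t, +oo[%classic)%E.
    rewrite (_ : nu `]-oo, t]%classic = 0%E) ?add0e //.
    apply: subset_measure0 nle0 => //.
      rewrite (_ : [set y : R | y <= 0] = `]-oo, 0]%classic); first exact: measurable_itv.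
      by apply/seteqP; split => y /=; rewrite in_itv.
    by move=> y /=; rewrite in_itv /= => /le_trans; apply.
  rewrite -measureU //.
    rewrite (_ : _ `|` _ = setT) //; apply/seteqP; split => y // _ /=.
    by rewrite !in_itv /=; case: (leP y t) => _; [left|right].
  apply/seteqP; split => y // [] /=; rewrite !in_itv /= ?andbT => yt ty.
  by have := le_lt_trans yt ty; rewrite ltxx.
apply: (measure_unique (RGenOInfty.G (R:=R)) (fun n => `]-(n%:R), +oo[%classic)).
- exact: RGenOInfty.measurableE.
- move=> _ _ [x ->] [y ->]; exists (Num.max x y); apply/seteqP; split => z /=;
    rewrite !in_itv /= !andbT gt_max.
    by move=> [-> ->].
  by move/andP.
- by move=> n; exists (- n%:R).
- apply/seteqP; split => y // _ /=.
  have [n hn] : exists n : nat, - y < n%:R.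
    by exists (Num.Def.trunc (- y)).+1; exact: truncnS_gt.
  by exists n => //=; rewrite in_itv /= andbT ltrNl.
- move=> _ [x ->]; have [x0|x0] := ltP 0 x; first exact: rayp.
  by rewrite !rayn.
- move=> k; case: h1 => n1 _ _ _.
  apply: (@le_lt_trans _ _ (nu1 setT)); last by rewrite n1 ltry.
  by apply: le_measure; rewrite ?inE //.
Qed.

End uniq.

Lemma phi_conv (R : realType) (nu : {measure set R -> \bar R}) (t : R) :
  good nu -> 0 < t ->
  (\int[nu]_y (phi (1 + t)^-1 y)%:E)%E =
  ((Num.min (1 + t)^-1 (1 - (1 + t)^-1) - (1 + t)^-1)%:E
     + ((1 + t)^-1)%:E * C nu t)%E.
Proof.
move=> [n1 nle0 nid nabs] t0.
set w := (1 + t)^-1; set m := Num.min w (1 - w).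
have t1 : 1 + t != 0 by rewrite gt_eqF // addr_gt0.
have w0 : 0 < w by rewrite invr_gt0 addr_gt0.
have wt : w * t = 1 - w by rewrite /w; field.
rewrite (eq_integral (fun y : R => ((m%:E + (- w)%:E * y%:E) + w%:E * (Num.max (y - t) 0)%:E)%E)); last first.
  move=> y _; rewrite -!EFinM -!EFinD; congr (_%:E); rewrite /phi -/w -/m.
  have [yt|yt] := leP y t.
    rewrite min_l; last by rewrite -wt ler_wpM2l // ltW.
    by rewrite max_r ?subr_le0 // mulr0 addr0 mulNr.
  rewrite min_r; last by rewrite -wt ler_wpM2l // ltW.
  rewrite max_l ?subr_ge0 ?ltW // mulrBr wt; ring.
have iC' := iC n1 nabs t.
rewrite integralD //; last 2 first.
- apply: integrableD => //; first exact: icst.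
  apply: integrableZl => //; exact: iid.
- exact: integrableZl.
rewrite integralD //; [|exact: icst n1 m|by apply: integrableZl => //; exact: iid].
rewrite integral_cst // n1 mule1 integralZl //; last exact: iid.
rewrite nid mule1 integralZl //.
Qed.

Lemma fin_cancel (R : realType) (a w : R) (x y : \bar R) : w != 0 ->
  x \is a fin_num -> y \is a fin_num ->
  (a%:E + w%:E * x = a%:E + w%:E * y)%E -> x = y.
Proof.
move=> w0 fx fy h; rewrite -(fineK fx) -(fineK fy); congr (_%:E).
move: h; rewrite -(fineK fx) -(fineK fy) -!EFinM -!EFinD.
by move=> [] /addrI /(mulfI w0).
Qed.

Lemma measurable_phi (R : realType) (w : R) : measurable_fun setT (phi w).
Proof.
rewrite /phi; apply: measurable_funB => //; apply: measurable_minr => //.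
Qed.

Lemma good_nu (R : realType) d (T : measurableType d) (P Q : probability T R)
  (mu : {measure set T -> \bar R}) (p q : T -> R)
  (PQ : P `<< Q) (QP : Q `<< P)
  (hp : is_density mu P p) (hq : is_density mu Q q) : good (nu hp hq).
Proof.
split.
- exact: nu_setT.
- exact: nu_le0.
- by apply: (transfer_id PQ QP).
- apply: (@transfer_id _ _ _ _ _ _ _ _ PQ QP hp hq (@Num.norm R R)) => //.
  by move=> y y0; rewrite ger0_norm.
Qed.

Unset Implicit Arguments.

Theorem corollary1 (R : realType) (f : R -> R)
  (d : measure_display) (T : measurableType d)
  (d' : measure_display) (T' : measurableType d')
  (P Q : probability T R) (P' Q' : probability T' R)
  (mu : {measure set T -> \bar R}) (mu' : {measure set T' -> \bar R})
  (p q : T -> R) (p' q' : T' -> R) :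
  classC f ->
  (forall x, 0 < x -> derivable f x 1) ->
  P `<< Q -> Q `<< P -> P' `<< Q' -> Q' `<< P' ->
  is_density mu P p -> is_density mu Q q ->
  is_density mu' P' p' -> is_density mu' Q' q' ->
  ((forall gamma : R, 1 <= gamma ->
       Egamma gamma P Q = Egamma gamma P' Q' /\
       Egamma gamma Q P = Egamma gamma Q' P') ->
     fdiv mu f p q = fdiv mu' f p' q') /\
  ((forall omega : R, 0 < omega < 1 ->
       fdiv mu (phi omega) p q = fdiv mu' (phi omega) p' q') ->
     fdiv mu f p q = fdiv mu' f p' q').
Proof.
move=> _ hder PQ QP PQ' QP' hp hq hp' hq'.
pose F y := if 0 < y then f y else 0.
have mF : measurable_fun setT F.
  apply: measurable_fun_if => //; first exact: measurable_fun_ltr.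
  rewrite setTI (_ : _ @^-1` _ = `]0, +oo[%classic); last first.
    by apply/seteqP; split => x /=; rewrite in_itv /= andbT.
  apply: subspace_continuous_measurable_fun => //.
  apply: derivable_within_continuous => x; rewrite in_itv /= andbT.
  exact: hder.
have hF y : 0 < y -> F y = f y by move=> y0; rewrite /F y0.
have g1 := good_nu PQ QP hp hq.
have g2 := good_nu PQ' QP' hp' hq'.
have main : (forall t, 0 < t -> C (nu hp hq) t = C (nu hp' hq') t) ->
    fdiv mu f p q = fdiv mu' f p' q'.
  move=> hC; rewrite (fdiv_transfer PQ QP hp hq mF hF).
  rewrite (fdiv_transfer PQ' QP' hp' hq' mF hF).
  by apply: eq_measure_integral => A mA _; exact: (nu_uniq g1 g2 hC mA).
split => H; apply: main => t t0.
- have [t1|t1] := leP 1 t.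
    rewrite /C -(Egamma_PQ PQ QP hp hq) -(Egamma_PQ PQ' QP' hp' hq').
    exact: (H t t1).1.
  case: g1 => n1 _ nid nabs; case: g2 => n1' _ nid' nabs'.
  rewrite (C_conv n1 nid nabs t0) (C_conv n1' nid' nabs' t0).
  have ti : 0 <= t^-1 by rewrite invr_ge0 ltW.
  rewrite -(Egamma_QP hp hq ti) -(Egamma_QP hp' hq' ti).
  have ht : 1 <= t^-1 by rewrite invf_ge1 // ltW.
  by rewrite (H _ ht).2.
- have w01 : 0 < (1 + t)^-1 < 1.
    rewrite invr_gt0 addr_gt0 //= invf_lt1 ?addr_gt0 //.
    by rewrite ltrDl.
  have := H _ w01.
  rewrite (fdiv_transfer PQ QP hp hq (measurable_phi _) (fun _ _ => erefl)).
  rewrite (fdiv_transfer PQ' QP' hp' hq' (measurable_phi _) (fun _ _ => erefl)).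
  rewrite !phi_conv //.
  apply: fin_cancel.
  + by rewrite invr_eq0 gt_eqF // addr_gt0.
  + case: g1 => n1 _ _ nabs; exact: integrable_fin_num (iC n1 nabs t).
  + case: g2 => n1 _ _ nabs; exact: integrable_fin_num (iC n1 nabs t).
Qed.
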